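(* Let $n\ge 1$, let $w \in S_n$ be a permutation of $\{1,\dots,n\}$, and let $\phi(w) = p_1 \cdots p_n$ be the associated Motzkin path. Then \[\operatorname{dep}(w) = \sum_{k:\, p_k = D} k \;-\; \sum_{i:\, p_i = U} i.\]
   Context: For $w\in S_n$, the depth is $\operatorname{dep}(w)=\sum_{i:\,w(i)>i}(w(i)-i)$, i.e. half the total displacement $\sum_{i=1}^n |w(i)-i|$. (This equals the minimum of $\sum_{s=1}^k (j_s-i_s)$ over all factorizations $w=(i_1\,j_1)\cdots(i_k\,j_k)$ into transpositions with $i_s<j_s$.) A Motzkin path of length $n$ is a word $p_1\cdots p_n$ in the letters $U,D,H$ such that the subword formed by the letters $U$ and $D$ is a balanced parenthesization ($U$ opening, $D$ closing). The map $\phi\colon S_n\to\{\text{Motzkin paths of length } n\}$ is defined by $\phi(w)=p_1\cdots p_n$ where $p_i=U$ if $w^{-1}(i)>i<w(i)$, $p_i=D$ if $w^{-1}(i)<i>w(i)$, and $p_i=H$ otherwise. *)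

(* Defs.v *)
From HB Require Import structures.
From mathcomp Require Import all_boot all_algebra fingroup perm.
Set Implicit Arguments. Unset Strict Implicit. Unset Printing Implicit Defensive.

(* Permutations of {1,...,n} are modelled as w : 'S_n acting on 'I_n = {0,...,n-1};
   position i : 'I_n stands for the integer i+1.  Shifting by 1 does not change
   differences w(i) - i nor comparisons. *)

Definition dep n (w : 'S_n) : nat :=
  \sum_(i < n | i < w i) (w i - i).

Inductive motzkin_letter := U | D | H.

Definition motzkin_letter_eqb (a b : motzkin_letter) : bool :=
  match a, b with U, U | D, D | H, H => true | _, _ => false end.
Lemma motzkin_letter_eqP : Equality.axiom motzkin_letter_eqb.
Proof. by case; case; constructor. Qed.
HB.instance Definition _ := hasDecEq.Build motzkin_letter motzkin_letter_eqP.

Definition phi_letter n (w : 'S_n) (i : 'I_n) : motzkin_letter :=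
  if (i < (w^-1)%g i) && (i < w i) then U
  else if ((w^-1)%g i < i) && (w i < i) then D
  else H.

Definition phi n (w : 'S_n) : seq motzkin_letter :=
  [seq phi_letter w i | i <- enum 'I_n].

(* Main.v *)
Require Import Defs.
From mathcomp Require Import all_boot all_algebra fingroup perm.
From mathcomp Require Import zify.
Import GRing.Theory Num.Theory.
Local Open Scope ring_scope.

Theorem proposition3p1 (n : nat) (hn : (1 <= n)%N) (w : 'S_n) :
  (dep w)%:Z =
    (\sum_(k < n | nth H (phi w) k == D) (k.+1)%:Z)
    - (\sum_(i < n | nth H (phi w) i == U) (i.+1)%:Z).
Proof.
have Hdep : (dep w)%:Z = \sum_(i < n) (if (i < w i)%N then (w i)%:Z else 0)
                      - \sum_(i < n) (if (i < w i)%N then (i:nat)%:Z else 0).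
  rewrite /dep (big_morph Posz PoszD (erefl _)) big_mkcond /= -sumrB.
  apply: eq_bigr => i _; case: ifP => h; last by rewrite subr0.
  by rewrite subzn // ltnW.
have Hre : forall F : nat -> int,
    \sum_(i < n) (if (i < w i)%N then F (w i) else 0)
  = \sum_(j < n) (if ((w^-1)%g j < j)%N then F j else 0).
  move=> F; rewrite [RHS](reindex_inj (@perm_inj _ w)) /=.
  by apply: eq_bigr => i _; rewrite permK.
have Hfix : forall j : 'I_n, ((w^-1)%g j == j) = (w j == j).
  move=> j; apply/eqP/eqP => h.
    by rewrite -{1}h permKV.
  by rewrite -{1}h permK.
have Hnth : forall k : 'I_n, nth H (phi w) k = phi_letter w k.
  move=> k; rewrite /phi (nth_map k) ?size_enum_ord //.
  by rewrite nth_ord_enum.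
have Hr : \sum_(k < n | nth H (phi w) k == D) (k.+1)%:Z
    - \sum_(i < n | nth H (phi w) i == U) (i.+1)%:Z
  = \sum_(j < n) ((if ((w^-1)%g j < j)%N then (j:nat)%:Z else 0)
                 + (if ((w^-1)%g j < j)%N then 1 else 0))
  - \sum_(j < n) ((if (j < w j)%N then (j:nat)%:Z else 0)
                 + (if (j < w j)%N then 1 else 0)).
  rewrite !(big_mkcond (fun k : 'I_n => nth H (phi w) k == _)) /= -!sumrB.
  apply: eq_bigr => j _; rewrite Hnth /phi_letter.
  have hf : (((w^-1)%g j : nat) = j) <-> ((w j : nat) = j).
    split=> h.
      have: (w^-1)%g j == j by apply/eqP/val_inj.
      by rewrite Hfix => /eqP ->.
    have: w j == j by apply/eqP/val_inj.
    by rewrite -Hfix => /eqP ->.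
  move: hf; move: ((w^-1)%g j : nat) (w j : nat) (j : nat) => a b c hf.
  case: (ltnP c a) => h1; case: (ltnP a c) => h2; case: (ltnP c b) => h3;
    case: (ltnP b c) => h4 /=; lia.
rewrite Hr Hdep !big_split /=.
rewrite (Hre (fun k => k%:Z)) (Hre (fun _ => 1)).
by rewrite opprD addrACA subrr addr0.
Qed.
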